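(* Let $\psi$ be a reduced function with $\delta(\psi)<\sqrt3$. Then either the family $(t_k)$ is finite, or $\psi(t_k)=t_{k-1}-1$ for every sufficiently large $k$.
   Context: $\mathcal{A}$ is an alphabet disjoint from $\mathbb{N}^*=\{1,2,\dots\}$. A function is a map $\psi:\mathbb{N}^*\to\mathbb{N}^*\sqcup\mathcal{A}$ such that for every $n\ge1$ either $\psi(n)\in\mathcal{A}$ or $1\le\psi(n)\le n-1$. Let $(t_k)_{k\ge0}$ be the (finite or infinite) family, in increasing order, of all $n\ge1$ with $\psi(n)\in\mathcal{A}$ or $1\le\psi(n)\le n-2$. $\psi$ is reduced if for every $k\ge1$ such that $t_k$ exists: $\psi(t_k)\ne\psi(t_{k-1})$, and either $\psi(t_k)\in\mathcal{A}$ or $\psi(t_k)<t_{k-1}$. For reduced $\psi$, define $n_1=0$ and for $i\ge1$: $n_{i+1}=2n_i-n_{\psi(i)}$ if $\psi(i)\in\mathbb{N}^*$, $n_{i+1}=2n_i+1$ if $\psi(i)\in\mathcal{A}$; then $\delta(\psi)=\limsup_{i\to\infty}n_{i+1}/n_i$. *)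

(* Defs.v *)
From Stdlib Require Import Reals Arith Lia.
From Coquelicot Require Import Coquelicot.
Open Scope R_scope.

(* A "function" psi : N* -> N* ⊔ A is modelled as psi : nat -> A + nat,
   where inl a is a letter of the alphabet and inr m the integer m.
   Only arguments n >= 1 are relevant; psi 0 is ignored. *)
Definition is_function {A : Type} (psi : nat -> A + nat) : Prop :=
  forall n : nat, (1 <= n)%nat ->
    match psi n with
    | inl _ => True
    | inr m => (1 <= m <= n - 1)%nat
    end.

(* membership in the family (t_k): psi(n) in A or 1 <= psi(n) <= n-2 *)
Definition inT {A : Type} (psi : nat -> A + nat) (n : nat) : Prop :=
  (1 <= n)%nat /\
  match psi n with
  | inl _ => True
  | inr m => (1 <= m <= n - 2)%nat
  end.

(* t' and t are consecutive members of the family, i.e. t' = t_(k-1), t = t_k *)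
Definition consec {A : Type} (psi : nat -> A + nat) (t' t : nat) : Prop :=
  inT psi t' /\ inT psi t /\ (t' < t)%nat /\
  (forall u : nat, (t' < u < t)%nat -> ~ inT psi u).

Definition reduced {A : Type} (psi : nat -> A + nat) : Prop :=
  forall t' t : nat, consec psi t' t ->
    psi t <> psi t' /\
    match psi t with
    | inl _ => True
    | inr m => (m < t')%nat
    end.

(* nf k j = n_j for j <= k (with junk n_0 = 0); n_1 = 0,
   n_(i+1) = 2 n_i - n_(psi i) or 2 n_i + 1. *)
Fixpoint nf {A : Type} (psi : nat -> A + nat) (k : nat) : nat -> R :=
  match k with
  | O => fun _ => 0
  | S k' =>
      let f := nf psi k' in
      fun j =>
        if (j <=? k')%nat then f j
        else match k' with
             | O => 0
             | _ => match psi k' with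
                    | inl _ => 2 * f k' + 1
                    | inr m => 2 * f k' - f m
                    end
             end
  end.

Definition nval {A : Type} (psi : nat -> A + nat) (i : nat) : R := nf psi i i.

(* delta(psi) = limsup_i n_(i+1)/n_i  (finitely many junk terms do not matter) *)
Definition delta {A : Type} (psi : nat -> A + nat) : Rbar :=
  LimSup_seq (fun i => nval psi (S i) / nval psi i).

(* Main.v *)
Require Import Defs.
From Stdlib Require Import Reals Arith Lia Lra Psatz Classical.
From Coquelicot Require Import Coquelicot.
Open Scope R_scope.

Lemma ev_lt (u : nat -> R) (c : R) : Rbar_lt (LimSup_seq u) (Finite c) ->
  exists N, forall i, (N <= i)%nat -> u i < c.
Proof.
  intros Hlt.
  assert (H : is_LimSup_seq u (LimSup_seq u)) by exact (proj2_sig (ex_LimSup_seq u)).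
  destruct (LimSup_seq u) as [l| |].
  - simpl in Hlt. assert (Hp : 0 < (c - l)/2) by lra.
    destruct (H (mkposreal _ Hp)) as [_ [N HN]]. exists N. intros i Hi.
    specialize (HN i Hi). simpl in HN. lra.
  - simpl in Hlt. contradiction.
  - destruct (H c) as [N HN]. exists N. exact HN.
Qed.

Lemma nf_stable {A} (psi : nat -> A + nat) k j : (j <= k)%nat -> nf psi (S k) j = nf psi k j.
Proof. intros H. simpl. rewrite (proj2 (Nat.leb_le j k) H). reflexivity. Qed.

Lemma nf_nval {A} (psi : nat -> A + nat) k j : (j <= k)%nat -> nf psi k j = nval psi j.
Proof.
  induction k; intros H.
  - assert (j = 0%nat) by lia. subst. reflexivity.
  - destruct (Nat.eq_dec j (S k)). subst. reflexivity.
    rewrite nf_stable by lia. apply IHk. lia.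
Qed.

Lemma nval_0 {A} (psi : nat -> A + nat) : nval psi 0 = 0.
Proof. reflexivity. Qed.
Lemma nval_1 {A} (psi : nat -> A + nat) : nval psi 1 = 0.
Proof. reflexivity. Qed.

Lemma nval_inl {A} (psi : nat -> A + nat) i a : (1 <= i)%nat -> psi i = inl a ->
  nval psi (S i) = 2 * nval psi i + 1.
Proof.
  intros Hi Ha. unfold nval. simpl.
  destruct i as [|i']. lia.
  replace (S i' <=? i')%nat with false by (symmetry; apply Nat.leb_gt; lia).
  rewrite Ha. reflexivity.
Qed.

Lemma nval_inr {A} (psi : nat -> A + nat) i m : (1 <= i)%nat -> psi i = inr m -> (m <= i)%nat ->
  nval psi (S i) = 2 * nval psi i - nval psi m.
Proof.
  intros Hi Ha Hm. unfold nval at 1. simpl.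
  destruct i as [|i']. lia.
  replace (S i' <=? i')%nat with false by (symmetry; apply Nat.leb_gt; lia).
  rewrite Ha. rewrite (nf_nval psi (S i') m Hm). reflexivity.
Qed.

Definition dd {A} (psi : nat -> A + nat) (j : nat) : R := nval psi j - nval psi (j - 1).

Lemma psi_m {A} (psi : nat -> A + nat) i m : is_function psi -> (1 <= i)%nat -> psi i = inr m ->
  (1 <= m <= i - 1)%nat.
Proof. intros Hf Hi H. specialize (Hf i Hi). rewrite H in Hf. exact Hf. Qed.

Lemma inT1 {A} (psi : nat -> A + nat) : is_function psi -> inT psi 1%nat.
Proof.
  intros Hf. split. lia. destruct (psi 1%nat) eqn:E. exact I.
  pose proof (psi_m psi 1%nat n Hf ltac:(lia) E). lia.
Qed.

Lemma nval2 {A} (psi : nat -> A + nat) : is_function psi -> nval psi 2 = 1.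
Proof.
  intros Hf. destruct (psi 1%nat) eqn:E.
  - rewrite (nval_inl psi 1%nat a) by (auto; lia). rewrite nval_1. lra.
  - pose proof (psi_m psi 1%nat n Hf ltac:(lia) E). lia.
Qed.

Definition Pb {A} (psi : nat -> A + nat) (i : nat) : Prop :=
  (forall j, (2 <= j <= i)%nat -> 1 <= dd psi j) /\
  (forall j, (3 <= j <= i)%nat -> dd psi (j - 1) <= dd psi j).

Lemma mono_of_Pb {A} (psi : nat -> A + nat) i : Pb psi i ->
  forall a b, (1 <= a)%nat -> (a <= b)%nat -> (b <= i)%nat -> nval psi a <= nval psi b.
Proof.
  intros [H1 _] a b Ha Hab Hb. induction b.
  - lia.
  - destruct (Nat.eq_dec a (S b)). subst; lra.
    assert (IH := IHb ltac:(lia) ltac:(lia)).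
    assert (Hd := H1 (S b) ltac:(lia)). unfold dd in Hd.
    replace (S b - 1)%nat with b in Hd by lia. lra.
Qed.

Lemma nval_nonneg_of_Pb {A} (psi : nat -> A + nat) i : Pb psi i ->
  forall a, (a <= i)%nat -> 0 <= nval psi a.
Proof.
  intros HP a Ha. destruct a. rewrite nval_0; lra.
  rewrite <- (nval_1 psi). apply (mono_of_Pb psi i HP); lia.
Qed.

Lemma Pb_all {A} (psi : nat -> A + nat) : is_function psi -> forall i, Pb psi i.
Proof.
  intros Hf. induction i.
  - split; intros; lia.
  - destruct (le_lt_dec i 1) as [Hi|Hi].
    + split; intros j Hj.
      * assert (j = 2%nat) by lia. subst. unfold dd. simpl (2-1)%nat.
        rewrite nval2, nval_1 by auto. lra.
      * lia.
    + assert (Hdi : dd psi i <= dd psi (S i) /\ 1 <= dd psi i).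
      { destruct IHi as [H1 H2]. split; [|apply H1; lia].
        unfold dd. replace (S i - 1)%nat with i by lia.
        destruct (psi i) eqn:E.
        - rewrite (nval_inl psi i a) by (auto; lia).
          pose proof (nval_nonneg_of_Pb psi i (conj H1 H2) (i-1) ltac:(lia)). lra.
        - pose proof (psi_m psi i n Hf ltac:(lia) E).
          rewrite (nval_inr psi i n) by (auto; lia).
          pose proof (mono_of_Pb psi i (conj H1 H2) n (i-1) ltac:(lia) ltac:(lia) ltac:(lia)). lra. }
      destruct IHi as [H1 H2]. split; intros j Hj.
      * destruct (Nat.eq_dec j (S i)). subst. lra. apply H1; lia.
      * destruct (Nat.eq_dec j (S i)). subst. replace (S i - 1)%nat with i by lia. lra. apply H2; lia.
Qed.

Lemma dd_ge1 {A} (psi : nat -> A + nat) : is_function psi -> forall j, (2 <= j)%nat -> 1 <= dd psi j.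
Proof. intros Hf j Hj. apply (proj1 (Pb_all psi Hf j)). lia. Qed.

Lemma dd_mono {A} (psi : nat -> A + nat) : is_function psi -> forall j, (2 <= j)%nat -> dd psi j <= dd psi (S j).
Proof. intros Hf j Hj. pose proof (proj2 (Pb_all psi Hf (S j)) (S j) ltac:(lia)).
  replace (S j - 1)%nat with j in H by lia. exact H. Qed.

Lemma n_mono {A} (psi : nat -> A + nat) : is_function psi ->
  forall a b, (1 <= a)%nat -> (a <= b)%nat -> nval psi a <= nval psi b.
Proof. intros Hf a b Ha Hab. apply (mono_of_Pb psi b (Pb_all psi Hf b)); lia. Qed.

Lemma n_ge1 {A} (psi : nat -> A + nat) : is_function psi -> forall a, (2 <= a)%nat -> 1 <= nval psi a.
Proof. intros Hf a Ha. rewrite <- (nval2 psi Hf). apply n_mono; auto; lia. Qed.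

Lemma notT {A} (psi : nat -> A + nat) j : is_function psi -> (1 <= j)%nat -> ~ inT psi j -> psi j = inr (j-1)%nat.
Proof.
  intros Hf Hj Hn. destruct (psi j) eqn:E.
  - exfalso. apply Hn. split; auto. rewrite E. exact I.
  - pose proof (psi_m psi j n Hf Hj E). f_equal.
    destruct (le_lt_dec n (j-2)). exfalso. apply Hn. split; auto. rewrite E. lia. lia.
Qed.

Lemma lin_seg {A} (psi : nat -> A + nat) t' t : is_function psi -> consec psi t' t ->
  forall j, (t' < j <= t)%nat -> dd psi j = dd psi (S t').
Proof.
  intros Hf [_ [_ [Hlt Hno]]].
  assert (K : forall k, (S t' + k <= t)%nat -> dd psi (S t' + k) = dd psi (S t')).
  { induction k; intros Hk. now rewrite Nat.add_0_r.
    rewrite <- IHk by lia.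
    set (j := (S t' + k)%nat).
    assert (psi j = inr (j-1)%nat) by (apply notT; auto; [lia| apply Hno; lia]).
    replace (S t' + S k)%nat with (S j) by lia. unfold dd.
    replace (S j - 1)%nat with j by lia.
    rewrite (nval_inr psi j (j-1)) by (auto; lia). lra. }
  intros j Hj. replace j with (S t' + (j - S t'))%nat by lia. apply K. lia.
Qed.

Lemma sb s : s*s = 3 -> 0 < s -> 1.73 < s < 1.7321.
Proof. intros. split; nra. Qed.

Lemma realA s G1 D1 D2 dl Dt: s*s = 3 -> 0 < s -> D1 + D2 + dl <= Dt ->
  Dt < (s-1)*(G1 - dl + D1 + Dt) -> D1 < (s-1)*(G1+D2+D1) -> G1 <= 0 -> D2 <= dl -> 0 <= D2 -> 0 <= D1 -> False.
Proof. intros Hs Hp H1 H2 H3 H4 H5 H6 H7. pose proof (sb s Hs Hp).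
  assert (E1: (2-s)*(D1+D2+dl) < (s-1)*(G1 - dl + D1)) by nra.
  assert (E2: (2-s)*D1 < (s-1)*(G1+D2)) by nra.
  assert (E3: (2*s-3)*((2-s)*D1) <= (2*s-3)*((s-1)*(G1+D2))) by (apply Rmult_le_compat_l; lra).
  nra.
Qed.

Lemma realB1a s G1 G2 D1 D2 D3 dl Dt: s*s = 3 -> 0 < s -> D1 + D2 + dl <= Dt ->
  Dt < (s-1)*(G1 - dl + D1 + Dt) -> D1 = D2 + D3 -> G1 = G2 -> 2*D3 <= dl ->
  D2 < (s-1)*(G2+D3+D2) -> G2 <= 0 -> 0 <= D2 -> 0 <= D3 -> False.
Proof. intros Hs Hp H1 H2 H3 H4 H5 H6 H7 H8 H9. pose proof (sb s Hs Hp). subst.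
  assert (E1: (2-s)*(D2+D3+D2+dl) < (s-1)*(G2 - dl + D2+D3)) by nra.
  assert (E2: (2-s)*D2 < (s-1)*(G2+D3)) by nra.
  assert (E3: (3*s-5)*((2-s)*D2) <= (3*s-5)*((s-1)*(G2+D3))) by (apply Rmult_le_compat_l; lra).
  nra.
Qed.

Lemma realB1b s G1 G2 G3 D1 D2 D3 e dl d2 Dt: s*s = 3 -> 0 < s -> D1 + D2 + dl <= Dt ->
  Dt < (s-1)*(G1 - dl + D1 + Dt) -> D1 = D2 + D3 -> G1 = G2 -> D3 + e <= dl ->
  D2 = D3 + e + d2 -> G2 = G3 - d2 -> 0 <= d2 -> G3 <= 0 -> 0 <= e -> 0 <= D3 -> False.
Proof. intros. pose proof (sb s H H0). subst. nra. Qed.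

Lemma realB2b s G1 G2 G3 D1 D2 D3 e dl d1 d2 Dt: s*s = 3 -> 0 < s -> D1 + D2 + dl <= Dt ->
  Dt < (s-1)*(G1 - dl + D1 + Dt) -> D3 <= dl -> D1 = D2 + D3 + d1 -> 0 <= d1 -> G1 = G2 - d1 ->
  D2 = D3 + e + d2 -> G2 = G3 - d2 -> e <= D3 -> 0 <= e -> 0 <= d2 -> G3 <= 0 -> False.
Proof. intros. pose proof (sb s H H0). subst. nra. Qed.

Definition Gv {A} (psi : nat -> A + nat) (t : nat) : R :=
  nval psi (t - 1) + nval psi t - nval psi (S t).

Lemma consec_ge1 {A} (psi : nat -> A + nat) t' t : consec psi t' t -> (1 <= t')%nat /\ (2 <= t)%nat.
Proof. intros [[H _] [_ [H2 _]]]. lia. Qed.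

Lemma G_step {A} (psi : nat -> A + nat) t' t m : is_function psi -> consec psi t' t -> psi t = inr m ->
  Gv psi t = Gv psi t' - (nval psi (t' - 1) - nval psi m).
Proof.
  intros Hf Hc Hm. pose proof (consec_ge1 _ _ _ Hc).
  pose proof (psi_m psi t m Hf ltac:(lia) Hm).
  pose proof (lin_seg psi t' t Hf Hc t ltac:(destruct Hc as [_ [_ [? _]]]; lia)) as L.
  unfold dd in L. replace (S t' - 1)%nat with t' in L by lia.
  unfold Gv. rewrite (nval_inr psi t m) by (auto; lia). lra.
Qed.

Lemma n_t_decomp {A} (psi : nat -> A + nat) t' t : is_function psi -> consec psi t' t ->
  nval psi t = Gv psi t + (nval psi (S t') - nval psi t') + (nval psi (S t) - nval psi t).
Proof.
  intros Hf Hc. pose proof (consec_ge1 _ _ _ Hc).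
  pose proof (lin_seg psi t' t Hf Hc t ltac:(destruct Hc as [_ [_ [? _]]]; lia)) as L.
  unfold dd in L. replace (S t' - 1)%nat with t' in L by lia. unfold Gv. lra.
Qed.

Lemma pred_exists {A} (psi : nat -> A + nat) t : is_function psi -> inT psi t -> (1 < t)%nat ->
  exists t', consec psi t' t.
Proof.
  intros Hf Ht H1.
  assert (K : forall j, (exists u, (u <= j)%nat /\ inT psi u) ->
     exists t', (t' <= j)%nat /\ inT psi t' /\ forall v, (t' < v <= j)%nat -> ~ inT psi v).
  { induction j; intros [u [Hu Hiu]].
    - exists u. split; [lia|]. split; auto. intros; lia.
    - destruct (classic (inT psi (S j))) as [HS|HS].
      + exists (S j). split; [lia|]. split; auto. intros; lia.
      + destruct (Nat.eq_dec u (S j)). subst. contradiction.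
        destruct IHj as [t' [H1' [H2' H3']]]. exists u. split; auto; lia.
        exists t'. split; [lia|]. split; auto. intros v Hv.
        destruct (Nat.eq_dec v (S j)). subst. auto. apply H3'. lia. }
  destruct (K (t-1)%nat) as [t' [H1' [H2' H3']]].
  { exists 1%nat. split. lia. apply inT1; auto. }
  exists t'. split; auto. split; auto. split. lia. intros u Hu. apply H3'. lia.
Qed.

Lemma consec_le {A} (psi : nat -> A + nat) t' t u : consec psi t' t -> inT psi u -> (u < t)%nat -> (u <= t')%nat.
Proof.
  intros [_ [_ [_ H]]] Hu Hlt. destruct (le_lt_dec u t'); auto. exfalso. apply (H u); auto.
Qed.

Lemma caseA {A} (psi : nat -> A + nat) t2 t1 t m : is_function psi -> consec psi t2 t1 -> consec psi t1 t ->
  psi t = inr m -> (m <= t1 - 2)%nat -> (t2 + 2 <= t1)%nat ->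
  nval psi (S t) < sqrt 3 * nval psi t -> nval psi (S t1) < sqrt 3 * nval psi t1 -> Gv psi t1 <= 0 -> False.
Proof.
  intros Hf Hc2 Hc1 Hm Hmle Hgap Rt Rt1 HG1.
  pose proof (consec_ge1 _ _ _ Hc1). pose proof (consec_ge1 _ _ _ Hc2).
  assert (Hlt1 : (t1 < t)%nat) by (destruct Hc1 as [_ [_ [? _]]]; lia).
  pose proof (psi_m psi t m Hf ltac:(lia) Hm).
  pose proof (G_step psi t1 t m Hf Hc1 Hm) as Gt.
  pose proof (n_t_decomp psi t1 t Hf Hc1) as Nt.
  pose proof (n_t_decomp psi t2 t1 Hf Hc2) as Nt1.
  pose proof (nval_inr psi t m ltac:(lia) Hm ltac:(lia)) as Rec.
  pose proof (n_mono psi Hf (S t1) t ltac:(lia) ltac:(lia)) as M1.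
  pose proof (lin_seg psi t2 t1 Hf Hc2 t1 ltac:(lia)) as L1.
  pose proof (lin_seg psi t2 t1 Hf Hc2 (t1-1) ltac:(lia)) as L2.
  unfold dd in L1, L2. replace (S t2 - 1)%nat with t2 in L1, L2 by lia.
  replace (t1 - 1 - 1)%nat with (t1 - 2)%nat in L2 by lia.
  pose proof (n_mono psi Hf m (t1-2) ltac:(lia) ltac:(lia)) as M2.
  pose proof (dd_ge1 psi Hf (S t2) ltac:(lia)) as P2. pose proof (dd_ge1 psi Hf (S t1) ltac:(lia)) as P1.
  unfold dd in P1, P2. replace (S t2 - 1)%nat with t2 in P2 by lia. replace (S t1 - 1)%nat with t1 in P1 by lia.
  apply (realA (sqrt 3) (Gv psi t1) (nval psi (S t1) - nval psi t1) (nval psi (S t2) - nval psi t2)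
    (nval psi (t1 - 1) - nval psi m) (nval psi (S t) - nval psi t)).
  - apply sqrt_sqrt; lra.
  - apply sqrt_lt_R0; lra.
  - lra.
  - rewrite <- Gt. nra.
  - nra.
  - exact HG1.
  - lra.
  - lra.
  - lra.
Qed.

Lemma local_contra {A} (psi : nat -> A + nat) t3 t2 t1 t m m1 m2 :
  is_function psi -> reduced psi ->
  consec psi t3 t2 -> consec psi t2 t1 -> consec psi t1 t -> (2 <= t3)%nat ->
  psi t = inr m -> (m <= t1 - 2)%nat -> psi t1 = inr m1 -> psi t2 = inr m2 ->
  nval psi (S t) < sqrt 3 * nval psi t -> nval psi (S t1) < sqrt 3 * nval psi t1 ->
  nval psi (S t2) < sqrt 3 * nval psi t2 ->
  Gv psi t1 <= 0 -> Gv psi t2 <= 0 -> Gv psi t3 <= 0 -> False.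
Proof.
  intros Hf Hred Hc3 Hc2 Hc1 Ht3 Hm Hmle Hm1 Hm2 Rt Rt1 Rt2 HG1 HG2 HG3.
  pose proof (consec_ge1 _ _ _ Hc1). pose proof (consec_ge1 _ _ _ Hc2). pose proof (consec_ge1 _ _ _ Hc3).
  assert (Hlt1 : (t1 < t)%nat) by (destruct Hc1 as [_ [_ [? _]]]; lia).
  assert (Hlt2 : (t2 < t1)%nat) by (destruct Hc2 as [_ [_ [? _]]]; lia).
  assert (Hlt3 : (t3 < t2)%nat) by (destruct Hc3 as [_ [_ [? _]]]; lia).
  destruct (le_lt_dec (t2 + 2) t1) as [Hgap|Hgap].
  { exact (caseA psi t2 t1 t m Hf Hc2 Hc1 Hm Hmle Hgap Rt Rt1 HG1). }
  assert (Et1 : t1 = S t2) by lia.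
  destruct (Hred t1 t Hc1) as [Hne _]. rewrite Hm, Hm1 in Hne.
  destruct (Hred t2 t1 Hc2) as [_ Hr1]. rewrite Hm1 in Hr1.
  destruct (Hred t3 t2 Hc3) as [_ Hr2]. rewrite Hm2 in Hr2.
  pose proof (psi_m psi t m Hf ltac:(lia) Hm).
  pose proof (psi_m psi t1 m1 Hf ltac:(lia) Hm1).
  pose proof (psi_m psi t2 m2 Hf ltac:(lia) Hm2).
  pose proof (G_step psi t1 t m Hf Hc1 Hm) as Gt.
  pose proof (G_step psi t2 t1 m1 Hf Hc2 Hm1) as Gt1.
  pose proof (G_step psi t3 t2 m2 Hf Hc3 Hm2) as Gt2.
  pose proof (n_t_decomp psi t1 t Hf Hc1) as Nt.
  pose proof (n_t_decomp psi t3 t2 Hf Hc3) as Nt2.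
  pose proof (nval_inr psi t m ltac:(lia) Hm ltac:(lia)) as Rec.
  pose proof (nval_inr psi t1 m1 ltac:(lia) Hm1 ltac:(lia)) as Rec1.
  pose proof (nval_inr psi t2 m2 ltac:(lia) Hm2 ltac:(lia)) as Rec2.
  pose proof (n_mono psi Hf (S t1) t ltac:(lia) ltac:(lia)) as M1.
  pose proof (lin_seg psi t2 t1 Hf Hc2 t1 ltac:(lia)) as L1.
  pose proof (lin_seg psi t3 t2 Hf Hc3 t2 ltac:(lia)) as L2.
  unfold dd in L1, L2. replace (S t2 - 1)%nat with t2 in L1 by lia.
  replace (S t3 - 1)%nat with t3 in L2 by lia.
  pose proof (dd_ge1 psi Hf (S t3) ltac:(lia)) as P3. pose proof (dd_ge1 psi Hf (S t2) ltac:(lia)) as P2.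
  pose proof (dd_ge1 psi Hf t3 ltac:(lia)) as P3'. pose proof (dd_mono psi Hf t3 ltac:(lia)) as Mo3.
  unfold dd in P2, P3, P3', Mo3. replace (S t2 - 1)%nat with t2 in P2 by lia.
  replace (S t3 - 1)%nat with t3 in P3, Mo3 by lia.
  assert (HR : sqrt 3 * sqrt 3 = 3) by (apply sqrt_sqrt; lra).
  assert (HP : 0 < sqrt 3) by (apply sqrt_lt_R0; lra).
  assert (Dt_ge : nval psi (S t1) - nval psi t1 + (nval psi (S t2) - nval psi t2) + (nval psi (t1 - 1) - nval psi m)
      <= nval psi (S t) - nval psi t) by lra.
  assert (Rt' : nval psi (S t) - nval psi t < (sqrt 3 - 1) * (Gv psi t1 - (nval psi (t1 - 1) - nval psi m)
      + (nval psi (S t1) - nval psi t1) + (nval psi (S t) - nval psi t))) by (rewrite <- Gt; nra).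
  subst t1. replace (S t2 - 1)%nat with t2 in * by lia.
  destruct (Nat.eq_dec m1 (t2 - 1)) as [E1|E1].
  - subst m1. assert (Hm' : (m <= t2 - 2)%nat) by (assert (m <> (t2 - 1)%nat) by congruence; lia).
    pose proof (n_mono psi Hf m (t2-2) ltac:(lia) ltac:(lia)) as M2.
    destruct (le_lt_dec (t3 + 2) t2) as [Hg2|Hg2].
    + pose proof (lin_seg psi t3 t2 Hf Hc3 (t2-1) ltac:(lia)) as L3.
      unfold dd in L3. replace (S t3 - 1)%nat with t3 in L3 by lia.
      replace (t2 - 1 - 1)%nat with (t2 - 2)%nat in L3 by lia.
      apply (realB1a (sqrt 3) (Gv psi (S t2)) (Gv psi t2) (nval psi (S (S t2)) - nval psi (S t2))
        (nval psi (S t2) - nval psi t2) (nval psi (S t3) - nval psi t3) (nval psi t2 - nval psi m)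
        (nval psi (S t) - nval psi t)); try assumption; try lra; nra.
    + assert (Et2 : t2 = S t3) by lia. subst t2.
      replace (S t3 - 1)%nat with t3 in * by lia. replace (S t3 - 2)%nat with (t3 - 1)%nat in * by lia.
      pose proof (n_mono psi Hf m2 (t3-1) ltac:(lia) ltac:(lia)) as M3.
      apply (realB1b (sqrt 3) (Gv psi (S (S t3))) (Gv psi (S t3)) (Gv psi t3)
        (nval psi (S (S (S t3))) - nval psi (S (S t3)))
        (nval psi (S (S t3)) - nval psi (S t3)) (nval psi (S t3) - nval psi t3)
        (nval psi t3 - nval psi (t3 - 1)) (nval psi (S t3) - nval psi m)
        (nval psi (t3 - 1) - nval psi m2) (nval psi (S t) - nval psi t)); try assumption; try lra.
  - assert (Hm1' : (m1 <= t2 - 2)%nat) by lia.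
    destruct (le_lt_dec (t3 + 2) t2) as [Hg2|Hg2].
    + exact (caseA psi t3 t2 (S t2) m1 Hf Hc3 Hc2 Hm1 Hm1' Hg2 Rt1 Rt2 HG2).
    + assert (Et2 : t2 = S t3) by lia. subst t2.
      replace (S t3 - 1)%nat with t3 in * by lia.
      pose proof (n_mono psi Hf m t3 ltac:(lia) ltac:(lia)) as M2.
      pose proof (n_mono psi Hf m1 t3 ltac:(lia) ltac:(lia)) as M4.
      pose proof (n_mono psi Hf m2 (t3-1) ltac:(lia) ltac:(lia)) as M3.
      apply (realB2b (sqrt 3) (Gv psi (S (S t3))) (Gv psi (S t3)) (Gv psi t3)
        (nval psi (S (S (S t3))) - nval psi (S (S t3)))
        (nval psi (S (S t3)) - nval psi (S t3)) (nval psi (S t3) - nval psi t3)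
        (nval psi t3 - nval psi (t3 - 1)) (nval psi (S t3) - nval psi m)
        (nval psi t3 - nval psi m1)
        (nval psi (t3 - 1) - nval psi m2) (nval psi (S t) - nval psi t)); try assumption; try lra.
Qed.

Lemma exists_nat_gt x : exists c : nat, x < INR c.
Proof.
  destruct (Rle_or_lt x 0) as [H|H]. exists 1%nat. simpl. lra.
  destruct (nfloor_ex x (Rlt_le _ _ H)) as [c Hc]. exists (S c). rewrite S_INR. lra.
Qed.

Theorem lemma7p1 (A : Type) (psi : nat -> A + nat)
  (Hfun : is_function psi) (Hred : reduced psi)
  (Hdelta : Rbar_lt (delta psi) (Finite (sqrt 3))) :
  (exists N : nat, forall t : nat, inT psi t -> (t <= N)%nat) \/
  (exists N : nat, forall t' t : nat, consec psi t' t -> (N <= t')%nat ->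
     psi t = inr (t' - 1)%nat).
Proof.
  destruct (classic (exists N : nat, forall t : nat, inT psi t -> (t <= N)%nat)) as [Hb|Hub].
  { left; exact Hb. }
  right. apply NNPP. intro Hnot.
  assert (Hv : forall N, exists t' t, consec psi t' t /\ (N <= t')%nat /\ psi t <> inr (t' - 1)%nat).
  { intro N. apply NNPP; intro C. apply Hnot. exists N. intros t' t Hc HN.
    apply NNPP; intro C2. apply C. exists t', t. auto. }
  assert (Hu : forall N, exists t, inT psi t /\ (N < t)%nat).
  { intro N. apply NNPP; intro C. apply Hub. exists N. intros t Ht.
    destruct (le_lt_dec t N); auto. exfalso; apply C; exists t; auto. }
  assert (HR : sqrt 3 * sqrt 3 = 3) by (apply sqrt_sqrt; lra).
  assert (HP : 0 < sqrt 3) by (apply sqrt_lt_R0; lra).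
  pose proof (sb _ HR HP) as Hsb.
  destruct (ev_lt _ _ Hdelta) as [N HN].
  set (N0 := Nat.max N 3).
  assert (R : forall i, (N0 <= i)%nat -> nval psi (S i) < sqrt 3 * nval psi i).
  { intros i Hi. specialize (HN i ltac:(lia)). cbv beta in HN.
    pose proof (n_ge1 psi Hfun i ltac:(lia)).
    assert (E : nval psi (S i) = nval psi (S i) / nval psi i * nval psi i) by (field; lra).
    rewrite E. nra. }
  assert (Hnum : forall i, (N0 <= i)%nat -> exists m, psi i = inr m).
  { intros i Hi. destruct (psi i) eqn:E; [exfalso|eauto].
    pose proof (R i Hi). rewrite (nval_inl psi i a) in H by (auto; lia).
    pose proof (n_ge1 psi Hfun i ltac:(lia)). nra. }
  assert (Gchain : forall t u, inT psi u -> inT psi t -> (N0 <= u)%nat -> (u <= t)%nat -> Gv psi t <= Gv psi u).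
  { intro t. induction t as [t IH] using lt_wf_ind. intros u Hu' Ht Hu0 Hut.
    destruct (Nat.eq_dec u t). subst; lra.
    destruct (pred_exists psi t Hfun Ht ltac:(destruct Hu' as [? _]; lia)) as [t' Hc].
    pose proof (consec_le psi t' t u Hc Hu' ltac:(lia)) as Hut'.
    destruct (Hnum t ltac:(lia)) as [m Hm].
    pose proof (psi_m psi t m Hfun ltac:(lia) Hm).
    destruct (Hred t' t Hc) as [_ Hr]. rewrite Hm in Hr.
    rewrite (G_step psi t' t m Hfun Hc Hm).
    pose proof (n_mono psi Hfun m (t'-1) ltac:(lia) ltac:(lia)).
    assert (Hlt : (t' < t)%nat) by (destruct Hc as [_ [_ [? _]]]; lia).
    pose proof (IH t' Hlt u Hu' (proj1 Hc) Hu0 Hut'). lra. }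
  assert (Gviol : forall t' t, consec psi t' t -> (N0 <= t')%nat -> psi t <> inr (t' - 1)%nat ->
            Gv psi t <= Gv psi t' - 1).
  { intros t' t Hc Ht' Hne.
    assert (Hlt : (t' < t)%nat) by (destruct Hc as [_ [_ [? _]]]; lia).
    destruct (Hnum t ltac:(lia)) as [m Hm].
    pose proof (psi_m psi t m Hfun ltac:(lia) Hm).
    destruct (Hred t' t Hc) as [_ Hr]. rewrite Hm in Hr.
    assert (m <> (t' - 1)%nat) by congruence.
    rewrite (G_step psi t' t m Hfun Hc Hm).
    pose proof (n_mono psi Hfun m (t'-2) ltac:(lia) ltac:(lia)).
    pose proof (dd_ge1 psi Hfun (t'-1) ltac:(lia)) as D. unfold dd in D.
    replace (t' - 1 - 1)%nat with (t' - 2)%nat in D by lia. lra. }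
  destruct (Hu N0) as [t0 [Ht0 Ht0N]].
  assert (Count : forall c : nat, exists t, inT psi t /\ (N0 <= t)%nat /\ Gv psi t <= Gv psi t0 - INR c).
  { induction c.
    - exists t0. split; [auto|split; [lia|simpl; lra]].
    - destruct IHc as [t [Ht [HtN HG]]].
      destruct (Hv t) as [t' [tv [Hc [Htt' Hne]]]].
      exists tv. pose proof (proj1 (proj2 Hc)) as Htv.
      assert (Hlt : (t' < tv)%nat) by (destruct Hc as [_ [_ [? _]]]; lia).
      split; auto. split. lia.
      pose proof (Gviol t' tv Hc ltac:(lia) Hne).
      pose proof (Gchain t' t Ht (proj1 Hc) HtN Htt').
      rewrite S_INR. lra. }
  destruct (exists_nat_gt (Gv psi t0)) as [c Hc].
  destruct (Count c) as [ts [Hts [HtsN HGs]]].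
  destruct (Hu ts) as [u1 [Hu1 Hu1t]].
  destruct (Hu u1) as [u2 [Hu2 Hu2t]].
  destruct (Hv (S u2)) as [t1 [t [Hc1 [Ht1 Hne]]]].
  destruct (pred_exists psi t1 Hfun (proj1 Hc1) ltac:(lia)) as [t2 Hc2].
  pose proof (consec_le psi t2 t1 u2 Hc2 Hu2 ltac:(lia)) as Hu2t2.
  assert (Hu1p : (1 <= u1)%nat) by (destruct Hu1 as [? _]; lia).
  destruct (pred_exists psi t2 Hfun (proj1 Hc2) ltac:(lia)) as [t3 Hc3].
  pose proof (consec_le psi t3 t2 u1 Hc3 Hu1 ltac:(lia)) as Hu1t3.
  assert (Hlt1 : (t1 < t)%nat) by (destruct Hc1 as [_ [_ [? _]]]; lia).
  assert (Hlt2 : (t2 < t1)%nat) by (destruct Hc2 as [_ [_ [? _]]]; lia).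
  assert (Hlt3 : (t3 < t2)%nat) by (destruct Hc3 as [_ [_ [? _]]]; lia).
  pose proof (Gchain t3 ts Hts (proj1 Hc3) HtsN ltac:(lia)).
  pose proof (Gchain t2 t3 (proj1 Hc3) (proj1 Hc2) ltac:(lia) ltac:(lia)).
  pose proof (Gchain t1 t2 (proj1 Hc2) (proj1 Hc1) ltac:(lia) ltac:(lia)).
  destruct (Hnum t ltac:(lia)) as [m Hm].
  destruct (Hnum t1 ltac:(lia)) as [m1 Hm1].
  destruct (Hnum t2 ltac:(lia)) as [m2 Hm2].
  destruct (Hred t1 t Hc1) as [_ Hr]. rewrite Hm in Hr.
  assert (m <> (t1 - 1)%nat) by congruence.
  apply (local_contra psi t3 t2 t1 t m m1 m2 Hfun Hred Hc3 Hc2 Hc1 ltac:(lia) Hm ltac:(lia) Hm1 Hm2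
    (R t ltac:(lia)) (R t1 ltac:(lia)) (R t2 ltac:(lia))); lra.
Qed.
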